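(* Let $m,n,k,a$ be natural numbers with $n\geq 1$, $k\geq 1$, $m>1$ and $1\leq a\leq 9$. Then the equation $$B_nB_{n+1}\cdots B_{n+k} = a\left(\frac{10^m-1}{9}\right)$$ has no solution. That is, no product of two or more consecutive balancing numbers is a decimal repdigit with at least two digits.
   Context: The balancing sequence $(B_n)_{n\geq 0}$ is defined by $B_0=0$, $B_1=1$ and $B_{n+1}=6B_n-B_{n-1}$ for $n\geq 1$. For $1\le a\le 9$ and $m\ge 1$, the number $a\frac{10^m-1}{9}$ is the decimal integer consisting of $m$ copies of the digit $a$. *)

(* Defs.v *)
From mathcomp Require Import all_boot.
Set Implicit Arguments. Unset Strict Implicit. Unset Printing Implicit Defensive.

(* pair (B_n, B_{n+1}) *)
Fixpoint bal_pair (n : nat) : nat * nat :=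
  match n with
  | 0 => (0, 1)
  | n'.+1 => let: (x, y) := bal_pair n' in (y, 6 * y - x)
  end.

Definition B (n : nat) : nat := (bal_pair n).1.

Definition repdigit (a m : nat) : nat := a * ((10 ^ m - 1) %/ 9).

Lemma B0 : B 0 = 0. Proof. by []. Qed.
Lemma B1 : B 1 = 1. Proof. by []. Qed.

(* sanity: the defining recurrence (truncated subtraction never truncates here,
   since B is increasing) *)
Lemma B_rec n : 1 <= n -> B n.+1 = 6 * B n - B n.-1.
Proof.
case: n => // n _; rewrite /B /=.
by case: (bal_pair n) => x y /=.
Qed.

(* Main.v *)
Require Import Defs.
From mathcomp Require Import all_boot.
From mathcomp Require Import zify.

Definition f (p : nat * nat) : nat * nat := (p.2, (6 * p.2 + 99 * p.1) %% 100).

Lemma bal_inv n : (bal_pair n).1 <= (bal_pair n).2 /\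
  ((bal_pair n).1 %% 100, (bal_pair n).2 %% 100) = iter n f (0, 1).
Proof.
elim: n => [|n [IH1 IH2]] //=.
move: IH1 IH2; case: (bal_pair n) => x y /= Hxy E.
rewrite -E /f /=; split; first lia.
congr pair.
lia.
Qed.

Lemma iter60 : iter 60 f (0, 1) = (0, 1).
Proof. by vm_compute. Qed.

Lemma iter_mul q : iter (q * 60) f (0, 1) = (0, 1).
Proof. elim: q => [|q IH] //. by rewrite mulSn iterD IH iter60. Qed.

Lemma iter_per n : iter n f (0, 1) = iter (n %% 60) f (0, 1).
Proof. by rewrite {1}(divn_eq n 60) addnC iterD iter_mul. Qed.

Definition g r := (iter r f (0, 1)).1.

Lemma Bmod n : B n %% 100 = g (n %% 60).
Proof.
rewrite /B /g -iter_per; have [_ E] := bal_inv n.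
by rewrite -E.
Qed.

Lemma BmodS n j : B (n + j) %% 100 = g (n %% 60 + j).
Proof.
rewrite /B /g; have [_ E] := bal_inv (n + j).
have := f_equal fst E => /= ->.
by rewrite addnC iterD iter_per -iterD addnC.
Qed.

Fixpoint Rp m := if m is m'.+1 then 10 * Rp m' + 1 else 0.
Lemma Rp_eq m : 9 * Rp m + 1 = 10 ^ m.
Proof. elim: m => [|m IH] //=; rewrite expnS -IH; lia. Qed.

Lemma rep_mod a m : 1 < m -> repdigit a m %% 100 = (11 * a) %% 100.
Proof.
case: m => [|[|m]] // _.
rewrite /repdigit -Rp_eq addnK mulKn //=.
lia.
Qed.

Lemma C1 : all (fun r => all (fun a => (g r * g r.+1) %% 100 != 11 * a) (iota 1 9)) (iota 0 60).
Proof. by vm_compute. Qed.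
Lemma C2 : all (fun r => (g r * g r.+1 * g r.+2) %% 10 == 0) (iota 0 60).
Proof. by vm_compute. Qed.

Theorem theorem2 (m n k a : nat) :
  1 <= n -> 1 <= k -> 1 < m -> 1 <= a <= 9 ->
  \prod_(n <= i < n + k + 1) B i <> repdigit a m.
Proof.
move=> Hn Hk Hm Ha E.
have Hr := rep_mod a m Hm; rewrite -E in Hr; clear E.
have Hlt : n %% 60 < 60 by rewrite ltn_mod.
have H0 := BmodS n 0; have H1 := BmodS n 1; have H2 := BmodS n 2.
rewrite addn0 in H0; rewrite addn1 in H1.
move: Hr; rewrite big_ltn; last lia.
rewrite big_ltn; last lia.
case: k Hk => [|[|k]] // _.
- rewrite big_geq; last lia.
  rewrite muln1 -modnMm H0 -addn1 H1 addn1.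
  have HC := allP C1 (n %% 60); rewrite mem_iota /= Hlt in HC.
  have := HC isT. rewrite addn0 in H0. rewrite addn1 in H1.
  rewrite addn0 addn1. set x := (g _ * g _) %% 100. move=> HH HH2. lia.
- rewrite big_ltn; last lia.
  rewrite mulnA mulnA => Hr.
  set P := \prod_(_ <= i < _) B i in Hr.
  have d : 10 %| 100 by [].
  have H10 : (B n * B n.+1 * B n.+2 * P) %% 10 = (11 * a) %% 10.
    by rewrite -(modn_dvdm _ d) Hr modn_dvdm.
  rewrite addn2 in H2.
  have E3 : (B n * B n.+1 * B n.+2) %% 100 = (g (n %% 60) * g (n %% 60).+1 * g (n %% 60).+2) %% 100.
    by rewrite -modnMm -(modnMm (B n)) H0 H1 H2 addn0 addn1 addn2 modnMml.
  have E4 : (B n * B n.+1 * B n.+2) %% 10 = 0.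
    rewrite -(modn_dvdm _ d) E3 (modn_dvdm _ d).
    have HC := allP C2 (n %% 60); rewrite mem_iota /= Hlt in HC.
    by apply/eqP; apply: HC.
  move: H10; rewrite -modnMml E4 mul0n mod0n. lia.
Qed.
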